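(* Let $X^{\mathrm{aff}}$ be one of the affine extensions $A_4^=$, $D_6^>$, $D_6^=$, $D_6^<$, with extended Cartan matrix $A^{\mathrm{aff}}=(A^{\mathrm{aff}}_{ij})_{0\le i,j\le n}$, simple roots $\alpha_1,\dots,\alpha_n$ (a basis of $V_n$), affine root $\alpha_0\in V_n$, and projection $\pi\in\{\pi_\parallel,\pi_\perp\}$ as in the context. Let $\rho$ be any Dynkin diagram automorphism of $X^{\mathrm{aff}}$, i.e. a permutation of $\{0,1,\dots,n\}$ with $A^{\mathrm{aff}}_{\rho(i)\rho(j)}=A^{\mathrm{aff}}_{ij}$ for all $i,j$ (this includes the automorphisms of the unextended diagrams $A_4$ and $D_6$, extended by $\rho(0)=0$). Then $\alpha_{\rho(1)},\dots,\alpha_{\rho(n)}$ is a basis of $V_n$; if $\pi^\rho:V_n\to\mathbb{R}^m$ denotes the linear map with $\pi^\rho(\alpha_{\rho(i)})=\pi(\alpha_i)$ for $i=1,\dots,n$, then $\pi^\rho(\alpha_{\rho(0)})=\pi(\alpha_0)$. Consequently the induced affine root, and hence the induced Cartan matrix $\hat A_{ij}=2(a_i\mid a_j)/(a_i\mid a_i)$ ($a_0$ the induced affine root, $a_1,\dots,a_m$ the simple roots of $H_m$), is the same whether the projection $\pi$ or the automorphism-twisted projection $\pi^\rho$ is used.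
   Context: Let $\tau=\tfrac12(1+\sqrt5)$, $\sigma=\tfrac12(1-\sqrt5)$. $V_n$ is a real vector space with basis $\alpha_1,\dots,\alpha_n$. Labelling: $A_4$: chain $\alpha_1-\alpha_2-\alpha_3-\alpha_4$; $D_6$: chain $\alpha_1-\cdots-\alpha_5$ with $\alpha_6$ joined to $\alpha_4$. The Cartan matrix of a simply-laced diagram has $A_{ii}=2$, $A_{ij}=-1$ if nodes $i,j$ are joined and $0$ otherwise. Extended Cartan matrices (indices $0,\dots,n$): $A_4^=$: the simply-laced cycle $0-1-2-3-4-0$; $D_6^=$: the $D_6$ diagram with node $0$ joined to node $2$ (simply laced); $D_6^<$: the $D_6$ Cartan matrix extended by node $0$ with $A_{01}=-2$, $A_{10}=-1$, $A_{0j}=A_{j0}=0$ for $j\ge2$; $D_6^>$: same but $A_{01}=-1$, $A_{10}=-2$. Affine roots in $V_n$: $A_4^=$: $-\alpha_0=\alpha_1+\alpha_2+\alpha_3+\alpha_4$; $D_6^=$: $-\alpha_0=\alpha_1+2\alpha_2+2\alpha_3+2\alpha_4+\alpha_5+\alpha_6$; $D_6^<$: $-\alpha_0=\alpha_1+\alpha_2+\alpha_3+\alpha_4+\tfrac12\alpha_5+\tfrac12\alpha_6$; $D_6^>$: $-\alpha_0=2\alpha_1+2\alpha_2+2\alpha_3+2\alpha_4+\alpha_5+\alpha_6$. Target: for $H_3$ ($m=3$), vectors $a_1,a_2,a_3\in\mathbb{R}^3$ with $(a_i\mid a_i)=1$, $(a_1\mid a_2)=-\tfrac12$, $(a_2\mid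 a_3)=-\tfrac\tau2$, $(a_1\mid a_3)=0$; for $H_2$ ($m=2$), $a_1,a_2\in\mathbb{R}^2$ with $(a_i\mid a_i)=1$, $(a_1\mid a_2)=-\tfrac\tau2$. Vectors $\bar a_i$ are defined likewise with $\tau$ replaced by $\sigma$. Projections: $\pi_\parallel:V_6\to\mathbb{R}^3$ ($D_6\to H_3$) by $\alpha_1\mapsto a_1$, $\alpha_2\mapsto a_2$, $\alpha_3\mapsto\tau a_3$, $\alpha_4\mapsto\tau a_2$, $\alpha_5\mapsto\tau a_1$, $\alpha_6\mapsto a_3$; $\pi_\parallel:V_4\to\mathbb{R}^2$ ($A_4\to H_2$) by $\alpha_1\mapsto a_1$, $\alpha_2\mapsto\tau a_2$, $\alpha_3\mapsto\tau a_1$, $\alpha_4\mapsto a_2$. $\pi_\perp$ is given by the same formulas with $\tau\to\sigma$ and $a_i\to\bar a_i$. The induced affine root is $\pi(\alpha_0)$. *)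

(* Defs.v *)
From HB Require Import structures.
From mathcomp Require Import all_boot all_order all_algebra.
Unset Printing Implicit Defensive.
Import Order.TTheory GRing.Theory Num.Theory.
Local Open Scope ring_scope.

Inductive afftype := A4eq | D6gt | D6eq | D6lt.
Inductive projkind := Par | Perp.

Definition dimn (X : afftype) : nat := match X with A4eq => 4 | _ => 6 end.
(* m = dimension of the target (H_2 or H_3); written as k.+1 *)
Definition dimmp (X : afftype) : nat := match X with A4eq => 1 | _ => 2 end.
Definition dimm (X : afftype) : nat := (dimmp X).+1.

Definition adj (es : seq (nat * nat)) (i j : nat) : bool :=
  ((i, j) \in es) || ((j, i) \in es).
Definition D6edges : seq (nat * nat) := [:: (1,2); (2,3); (3,4); (4,5); (4,6)]%N.

Definition cartanN (X : afftype) (i j : nat) : int :=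
  if i == j then 2 else
  match X with
  | A4eq => if adj [:: (0,1); (1,2); (2,3); (3,4); (4,0)]%N i j then -1 else 0
  | D6eq => if adj (D6edges ++ [:: (0,2)%N]) i j then -1 else 0
  | D6lt => if (i, j) == (0,1)%N then -2 else if (i, j) == (1,0)%N then -1
            else if adj D6edges i j then -1 else 0
  | D6gt => if (i, j) == (0,1)%N then -1 else if (i, j) == (1,0)%N then -2
            else if adj D6edges i j then -1 else 0
  end.

Definition cartan (X : afftype) (i j : 'I_(dimn X).+1) : int := cartanN X i j.

Section Roots.
Variable R : rcfType.

Definition tau : R := (1 + Num.sqrt 5) / 2.
Definition sigma : R := (1 - Num.sqrt 5) / 2.
Definition tparam (P : projkind) : R := if P is Par then tau else sigma.

(* -alpha_0 = sum_i coefN X (i-1) alpha_i ; list index 0 <-> alpha_1 *)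
Definition coefN (X : afftype) (i : nat) : R :=
  nth 0 (match X with
         | A4eq => [:: 1; 1; 1; 1]
         | D6eq => [:: 1; 2; 2; 2; 1; 1]
         | D6lt => [:: 1; 1; 1; 1; 1/2; 1/2]
         | D6gt => [:: 2; 2; 2; 2; 1; 1]
         end) i.

Definition alpha0 (X : afftype) : 'rV[R]_(dimn X) := \row_(i < dimn X) - coefN X i.

(* alpha_k for k = 0..n ; alpha_{i+1} is the i-th standard basis vector of V_n *)
Definition salpha (X : afftype) (k : 'I_(dimn X).+1) : 'rV[R]_(dimn X) :=
  if unlift ord0 k is Some i then delta_mx 0 i else alpha0 X.

(* pi(alpha_{i+1}) = (if b then t else 1) *: a_{k+1}, where (b,k) = piSpec X i *)
Definition piSpec (X : afftype) (i : nat) : bool * nat :=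
  nth (false, 0%N) (match X with
    | A4eq => [:: (false,0); (true,1); (true,0); (false,1)]%N
    | _ => [:: (false,0); (false,1); (true,2); (true,1); (true,0); (false,2)]%N
    end) i.

Definition projmx (X : afftype) (t : R) (a : 'I_(dimm X) -> 'rV[R]_(dimm X))
  : 'M[R]_(dimn X, dimm X) :=
  \matrix_(i < dimn X)
    ((if (piSpec X i).1 then t else 1) *: a (@inord (dimmp X) (piSpec X i).2)).

Definition piproj (X : afftype) (t : R) (a : 'I_(dimm X) -> 'rV[R]_(dimm X))
  (v : 'rV[R]_(dimn X)) : 'rV[R]_(dimm X) := v *m projmx X t a.

Definition dot {m : nat} (u v : 'rV[R]_m) : R := (u *m v^T) 0 0.

Definition gramOK (X : afftype) (t : R) (a : 'I_(dimm X) -> 'rV[R]_(dimm X)) : Prop :=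
  let b k := a (@inord (dimmp X) k) in
  match X with
  | A4eq => [/\ dot (b 0%N) (b 0%N) = 1, dot (b 1%N) (b 1%N) = 1
             & dot (b 0%N) (b 1%N) = - t / 2]
  | _ => [/\ dot (b 0%N) (b 0%N) = 1, dot (b 1%N) (b 1%N) = 1 & dot (b 2%N) (b 2%N) = 1]
         /\ [/\ dot (b 0%N) (b 1%N) = - 1 / 2,
                dot (b 1%N) (b 2%N) = - t / 2 & dot (b 0%N) (b 2%N) = 0]
  end.

(* induced Cartan matrix, index 0 <-> induced affine root a0, index i+1 <-> a_{i+1} *)
Definition inducedCartan (X : afftype) (a0 : 'rV[R]_(dimm X))
  (a : 'I_(dimm X) -> 'rV[R]_(dimm X)) : 'M[R]_((dimm X).+1) :=
  let b k := if unlift ord0 k is Some i then a i else a0 in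
  \matrix_(i, j) (2 * dot (b i) (b j) / dot (b i) (b i)).

End Roots.

(* Main.v *)
Require Import Defs.
From HB Require Import structures.
From mathcomp Require Import all_boot all_order all_fingroup all_algebra.
Import GRing.Theory Num.Theory.
Local Open Scope ring_scope.

Definition cntN X (i : nat) (v : int) : nat := count (fun j => cartanN X i j == v) (iota 0 (dimn X).+1).
Definition cntcN X (i : nat) (v : int) : nat := count (fun j => cartanN X j i == v) (iota 0 (dimn X).+1).
Definition code X (k : nat) : nat := nth 0%N (match X with
  | A4eq => [:: 1;1;1;1;1] | D6eq => [:: 1;1;2;2;2;1;1]
  | D6lt => [:: 1;1;1;1;1;0;0] | D6gt => [:: 1;2;2;2;2;1;1] end)%N k.

Lemma code_g X : all (fun i => all (fun j => 
   ((cntN X i (-1) == cntN X j (-1)) && (cntN X i (-2) == cntN X j (-2)) && (cntcN X i (-2) == cntcN X j (-2))) ==> (code X i == code X j)) (iota 0 (dimn X).+1)) (iota 0 (dimn X).+1).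
Proof. by case: X; vm_compute. Qed.

Lemma card_iota m (P : pred nat) : #|[pred j : 'I_m | P j]| = count P (iota 0 m).
Proof. rewrite -val_enum_ord count_map cardE /enum_mem. rewrite size_filter filter_predT. by apply: eq_count. Qed.

Lemma cnt_rho X (rho : {perm 'I_(dimn X).+1})
  (hrho : forall i j : 'I_(dimn X).+1, cartan X (rho i) (rho j) = cartan X i j) i v :
  #|[pred j : 'I_(dimn X).+1 | cartanN X (rho i) j == v]| = #|[pred j : 'I_(dimn X).+1 | cartanN X i j == v]| /\
  #|[pred j : 'I_(dimn X).+1 | cartanN X j (rho i) == v]| = #|[pred j : 'I_(dimn X).+1 | cartanN X j i == v]|.
Proof.
rewrite -!sum1_card.
split; rewrite (reindex_inj (@perm_inj _ rho)) /=; apply: eq_bigl => j;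
  have h1 := hrho i j; have h2 := hrho j i; rewrite /cartan in h1 h2; by rewrite !inE ?h1 ?h2.
Qed.

Lemma code_rho X (rho : {perm 'I_(dimn X).+1})
  (hrho : forall i j : 'I_(dimn X).+1, cartan X (rho i) (rho j) = cartan X i j) i :
  code X (rho i) = code X i.
Proof.
have := code_g X; move/allP/(_ (rho i)); rewrite mem_iota ltn_ord => /(_ isT).
move/allP/(_ i); rewrite mem_iota ltn_ord => /(_ isT) /implyP H.
apply/eqP/H.
rewrite /cntN /cntcN -!(card_iota _ (fun j => cartanN X _ j == _))
  -!(card_iota _ (fun j => cartanN X j _ == _)).
by rewrite !(proj1 (cnt_rho X rho hrho _ _)) !(proj2 (cnt_rho X rho hrho _ _)) !eqxx.
Qed.

Section Lin.
Variable R : rcfType.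

Definition mark X (k : nat) : R := if k == 0%N then 1 else Defs.coefN R X k.-1.
Definition decode (c : nat) : R := match c with 0%N => 1/2 | 1%N => 1 | _ => 2 end.

Lemma mark_code X k : (k < (dimn X).+1)%N -> mark X k = decode (code X k).
Proof.
by case: X; do 8? (case: k => [|k]) => //.
Qed.

Lemma mark_rho X (rho : {perm 'I_(dimn X).+1})
  (hrho : forall i j : 'I_(dimn X).+1, cartan X (rho i) (rho j) = cartan X i j) i :
  mark X (rho i) = mark X i.
Proof. by rewrite !mark_code // (code_rho X rho hrho). Qed.

Lemma rel0 X : \sum_(k < (dimn X).+1) mark X k *: salpha R X k = 0.
Proof.
rewrite big_ord_recl /mark /= scale1r /salpha unlift_none.
under eq_bigr => i _ do rewrite liftK add0n.
apply/rowP => j; rewrite !mxE summxE (bigD1 j) //= big1 => [|i /negbTE ij].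
  by rewrite !mxE !eqxx mulr1 addr0 addNr.
by rewrite mxE mxE eq_sym ij andbF mulr0.
Qed.

Lemma relrho X (rho : {perm 'I_(dimn X).+1})
  (hm : forall i, mark X (rho i) = mark X i) :
  salpha R X (rho ord0) = - \sum_(i < dimn X) mark X (lift ord0 i) *: salpha R X (rho (lift ord0 i)).
Proof.
have := rel0 X; rewrite (reindex_inj (@perm_inj _ rho)) /=.
under eq_bigr => k _ do rewrite hm.
rewrite big_ord_recl {1}/mark /= scale1r => /eqP; rewrite addr_eq0 => /eqP ->.
done.
Qed.

End Lin.

Theorem mainTheorem2 (R : rcfType) (X : afftype) (P : projkind)
  (a : 'I_(dimm X) -> 'rV[R]_(dimm X)) (ha : gramOK R X (tparam R P) a)
  (rho : {perm 'I_(dimn X).+1})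
  (hrho : forall i j : 'I_(dimn X).+1, cartan X (rho i) (rho j) = cartan X i j) :
  basis_of fullv [seq salpha R X (rho (lift ord0 i)) | i <- enum 'I_(dimn X)] /\
  forall f : {linear 'rV[R]_(dimn X) -> 'rV[R]_(dimm X)},
    (forall i : 'I_(dimn X),
        f (salpha R X (rho (lift ord0 i))) = piproj R X (tparam R P) a (salpha R X (lift ord0 i))) ->
    f (salpha R X (rho ord0)) = piproj R X (tparam R P) a (salpha R X ord0) /\
    inducedCartan R X (f (salpha R X (rho ord0))) a
      = inducedCartan R X (piproj R X (tparam R P) a (salpha R X ord0)) a.
Proof.
have hm := mark_rho R X rho hrho.
have Sr := relrho R X rho hm.
have S0 : salpha R X ord0 = - \sum_(i < dimn X) mark R X (lift ord0 i) *: salpha R X (lift ord0 i).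
  have := relrho R X 1 (fun i => ltac:(by rewrite perm1)).
  by under eq_bigr => i _ do rewrite perm1; rewrite perm1.
split.
  set s := [seq _ | _ <- _].
  have Hs : forall i, salpha R X (rho (lift ord0 i)) \in <<s>>%VS.
    by move=> i; apply: memv_span; apply: map_f; rewrite mem_enum.
  have Hall : forall k, salpha R X k \in <<s>>%VS.
    move=> k; have [Ek|nk] := eqVneq ord0 ((rho^-1)%g k).
      have -> : k = rho ord0 by rewrite Ek permKV.
      by rewrite Sr rpredN rpred_sum // => i _; rewrite rpredZ.
    have [j Ej _] := unlift_some nk.
    by have := Hs j; rewrite -Ej permKV.
  rewrite basisEdim size_map size_enum_ord dimvf /dim /= mul1n leqnn andbT.
  apply/subvP => v _; rewrite (row_sum_delta v) rpred_sum // => i _.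
  rewrite rpredZ //; have := Hall (lift ord0 i).
  by rewrite /salpha liftK.
move=> f hf.
have E : f (salpha R X (rho ord0)) = piproj R X (tparam R P) a (salpha R X ord0).
  rewrite Sr S0 linearN linear_sum /piproj mulNmx mulmx_suml; congr (- _).
  apply: eq_bigr => i _; by rewrite linearZ /= hf /piproj scalemxAl.
by rewrite E.
Qed.
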